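(* For $P,Q\in\mathcal E_n$ homogeneous of the same degree, the scalars $\Delta_P(Q)$, $\Delta_Q(P)$, $(P)\nabla_Q$ and $(Q)\nabla_P$ (elements of $\mathcal E_n^0=\mathbb Q$) are all equal. Consequently, setting $\langle P,Q\rangle$ equal to this common value for $P,Q$ homogeneous of equal degree and $\langle P,Q\rangle=0$ for homogeneous $P,Q$ of different degrees defines a symmetric bilinear form on $\mathcal E_n$, and for all $P_1,P_2,Q$: $\langle P_1P_2,Q\rangle=\langle P_1,\Delta_{P_2}(Q)\rangle=\langle P_2,(Q)\nabla_{P_1}\rangle$ (i.e. $\Delta_{P}$ is adjoint to right multiplication by $P$ and $\nabla_P$ to left multiplication by $P$).
   Context: Let $n\ge 1$. The Fomin–Kirillov algebra $\mathcal E_n$ is the associative $\mathbb Q$-algebra with generators $x_{ij}$ for ordered pairs of distinct $i,j\in[n]$, subject to $x_{ij}=-x_{ji}$, $x_{ij}^2=0$, $x_{ij}x_{kl}=x_{kl}x_{ij}$ for distinct $i,j,k,l$, and $x_{ij}x_{jk}+x_{jk}x_{ki}+x_{ki}x_{ij}=0$ for distinct $i,j,k$. It is graded by degree; $\mathcal E_n^d$ is the degree-$d$ part. $\mathcal E_n$ is also graded by $S_n$: the $S_n$-degree of $x_{ij}$ is the transposition $\sigma_{ij}=(i\,j)$, extended multiplicatively; $\sigma_Q$ is the $S_n$-degree of an $S_n$-homogeneous $Q$; $S_n$ acts by automorphisms via $\sigma(x_{ij})=x_{\sigma(i)\sigma(j)}$. For distinct $a,b$, $\Delta_{ab}:\mathcal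 E_n\to\mathcal E_n$ is the unique linear map with $\Delta_{ab}(x_{ij})=1$ if $(i,j)=(a,b)$, $-1$ if $(i,j)=(b,a)$, $0$ otherwise, and $\Delta_{ab}(PQ)=\Delta_{ab}(P)Q+\sigma_{ab}(P)\Delta_{ab}(Q)$; and $\nabla_{ab}$ (written on the right) is the unique linear map with $(x_{ij})\nabla_{ab}=\Delta_{ab}(x_{ij})$ and $(PQ)\nabla_{ab}=P\cdot(Q)\nabla_{ab}+(P)\nabla_{\sigma_Q(a)\sigma_Q(b)}\cdot Q$ for $S_n$-homogeneous $Q$. These operators satisfy the defining relations of $\mathcal E_n$ (with $x_{ab}\mapsto\Delta_{ab}$, resp. $\nabla_{ab}$), so for $P=x_{i_1j_1}\cdots x_{i_kj_k}$ one defines $\Delta_P=\Delta_{i_1j_1}\circ\cdots\circ\Delta_{i_kj_k}$ and $(Q)\nabla_P=(\cdots((Q)\nabla_{i_1j_1})\cdots)\nabla_{i_kj_k}$, extended linearly to all $P\in\mathcal E_n$. *)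

(* Defs.v *)
(* Fomin-Kirillov algebra E_n, presented as the free
   associative Q-algebra on letters x_ij (encoded as pairs (i,j)), modulo the
   two-sided ideal generated by the defining relations.  Elements of the free
   algebra are represented by formal finite sums: lists of (coefficient, word). *)
From HB Require Import structures.
From mathcomp Require Import all_boot all_order all_algebra all_fingroup.
Set Implicit Arguments. Unset Strict Implicit. Unset Printing Implicit Defensive.
Import Order.TTheory GRing.Theory Num.Theory.
Local Open Scope ring_scope.

Section FK.
Variable n : nat.

(* the letter (i,j) stands for the generator x_ij *)
Definition letter := ('I_n * 'I_n)%type.
Definition word := seq letter.
Definition fa := seq (rat * word).

Definition coef (P : fa) (w : word) : rat := \sum_(x <- P | x.2 == w) x.1.
Definition fadd (P Q : fa) : fa := P ++ Q.
Definition fscale (c : rat) (P : fa) : fa := [seq (c * x.1, x.2) | x <- P].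
Definition fmul (P Q : fa) : fa := [seq (x.1 * y.1, x.2 ++ y.2) | x <- P, y <- Q].
Definition fword (w : word) : fa := [:: (1, w)].
Definition x_ (i j : 'I_n) : fa := fword [:: (i, j)].

(* Defining relations of E_n (the letters (i,i) are killed, so that the free
   algebra on all pairs modulo them is the free algebra on the x_ij, i != j). *)
Inductive fk_rel : fa -> Prop :=
| rel_diag i : fk_rel (x_ i i)
| rel_anti i j : i != j -> fk_rel (fadd (x_ i j) (x_ j i))
| rel_sq i j : i != j -> fk_rel (fmul (x_ i j) (x_ i j))
| rel_comm i j k l : uniq [:: i; j; k; l] ->
    fk_rel (fadd (fmul (x_ i j) (x_ k l)) (fscale (-1) (fmul (x_ k l) (x_ i j))))
| rel_three i j k : uniq [:: i; j; k] ->
    fk_rel (fadd (fmul (x_ i j) (x_ j k))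
             (fadd (fmul (x_ j k) (x_ k i)) (fmul (x_ k i) (x_ i j)))).

Inductive fk_ideal : fa -> Prop :=
| ideal_nil : fk_ideal [::]
| ideal_cons (P r : fa) (c : rat) (u v : word) :
    fk_ideal P -> fk_rel r ->
    fk_ideal (fadd P (fscale c (fmul (fword u) (fmul r (fword v))))).

Definition fk_eq (P Q : fa) : Prop :=
  exists R, fk_ideal R /\ forall w, coef P w - coef Q w = coef R w.

Definition homogeneous (d : nat) (P : fa) : Prop :=
  forall w, size w != d -> coef P w = 0.

Definition hpart (d : nat) (P : fa) : fa := [seq x <- P | size x.2 == d].

(* degree 0 component, identified with a rational number: E_n^0 = Q *)
Definition scal (P : fa) : rat := coef P [::].

(* Delta_ab on generators; Delta_aa is taken to be 0 *)
Definition ev (a b : 'I_n) (l : letter) : rat :=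
  if a == b then 0 else if l == (a, b) then 1 else if l == (b, a) then -1 else 0.

Definition sig (a b : 'I_n) (l : letter) : letter :=
  (tperm a b l.1, tperm a b l.2).

(* Delta_ab(l w) = Delta_ab(l) w + sigma_ab(l) Delta_ab(w) *)
Fixpoint dlt_word (a b : 'I_n) (w : word) : fa :=
  match w with
  | [::] => [::]
  | l :: w' => (ev a b l, w') :: [seq (x.1, sig a b l :: x.2) | x <- dlt_word a b w']
  end.

(* (w l) nabla_ab = w (l)nabla_ab + (w) nabla_{s(a) s(b)} l,  s = sigma_l,
   computed on the reversed word *)
Fixpoint nab_rword (a b : 'I_n) (rw : word) : fa :=
  match rw with
  | [::] => [::]
  | l :: rw' => (ev a b l, rev rw') ::
      [seq (x.1, rcons x.2 l) | x <- nab_rword (tperm l.1 l.2 a) (tperm l.1 l.2 b) rw']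
  end.

Definition flin (f : word -> fa) (P : fa) : fa :=
  flatten [seq fscale x.1 (f x.2) | x <- P].

Definition Delta_ab (a b : 'I_n) (Q : fa) : fa := flin (dlt_word a b) Q.
Definition Nabla_ab (a b : 'I_n) (Q : fa) : fa := flin (fun w => nab_rword a b (rev w)) Q.

Definition DeltaW (w : word) (Q : fa) : fa := foldr (fun l X => Delta_ab l.1 l.2 X) Q w.
Definition NablaW (w : word) (Q : fa) : fa := foldl (fun X l => Nabla_ab l.1 l.2 X) Q w.

Definition Delta (P Q : fa) : fa := flatten [seq fscale x.1 (DeltaW x.2 Q) | x <- P].
Definition Nabla (Q P : fa) : fa := flatten [seq fscale x.1 (NablaW x.2 Q) | x <- P].

(* <P,Q> : for homogeneous P, Q of equal degree the scalar Delta_P(Q);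
   0 for different degrees; extended bilinearly *)
Definition fk_form (P Q : fa) : rat :=
  \sum_(x <- P) x.1 * scal (DeltaW x.2 (hpart (size x.2) Q)).

End FK.

(* Main.v *)
Require Import Defs.
From HB Require Import structures.
From mathcomp Require Import all_boot all_order all_algebra all_fingroup.
From mathcomp Require Import ring lra.
Set Implicit Arguments. Unset Strict Implicit. Unset Printing Implicit Defensive.
Import Order.TTheory GRing.Theory Num.Theory.
Local Open Scope ring_scope.

Section Work.
Variable n : nat.
Local Notation word := (word n).
Local Notation fa := (fa n).
Local Notation letter := (letter n).

Definition lin (phi : word -> rat) (F : fa) : rat := \sum_(x <- F) x.1 * phi x.2.

Lemma lin_ext phi psi F : phi =1 psi -> lin phi F = lin psi F.
Proof. by move=> e; apply: eq_bigr => x _; rewrite e. Qed.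

Lemma lin_cat phi F G : lin phi (F ++ G) = lin phi F + lin phi G.
Proof. by rewrite /lin big_cat. Qed.

Lemma lin_scale phi c F : lin phi (fscale c F) = c * lin phi F.
Proof.
rewrite /lin big_map big_distrr; apply: eq_bigr => x _ /=; by rewrite mulrA.
Qed.

Lemma lin_flat (T : Type) phi (P : seq (rat * T)) (G : T -> fa) :
  lin phi (flatten [seq fscale x.1 (G x.2) | x <- P]) = \sum_(x <- P) x.1 * lin phi (G x.2).
Proof.
elim: P => [|x P IH]; first by rewrite /lin !big_nil.
by rewrite /= lin_cat lin_scale IH big_cons.
Qed.

Lemma lin_fmul phi P Q :
  lin phi (fmul P Q) = \sum_(x <- P) \sum_(y <- Q) x.1 * y.1 * phi (x.2 ++ y.2).
Proof.
rewrite /lin /fmul big_allpairs_dep; apply: eq_bigr => x _; apply: eq_bigr => y _ //.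
Qed.

Lemma lin_map phi c F :
  lin phi [seq (x.1, c :: x.2) | x <- F] = lin (fun s => phi (c :: s)) F.
Proof. by rewrite /lin big_map. Qed.

Lemma lin_map_rcons phi c F :
  lin phi [seq (x.1, rcons x.2 c) | x <- F] = lin (fun s => phi (rcons s c)) F.
Proof. by rewrite /lin big_map. Qed.

Definition phi0 (w : word) : rat := (w == [::])%:R.

Lemma scal_lin F : scal F = lin phi0 F.
Proof.
rewrite /scal /coef /lin big_mkcond; apply: eq_bigr => x _ /=.
by rewrite /phi0; case: eqP => _; rewrite ?mulr1 ?mulr0.
Qed.

Fixpoint dop (a b : 'I_n) (phi : word -> rat) (w : word) : rat :=
  match w with
  | [::] => 0
  | m :: t => ev a b m * phi t + dop a b (fun s => phi (sig a b m :: s)) t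
  end.

Lemma lin_dlt a b phi w : lin phi (dlt_word a b w) = dop a b phi w.
Proof.
elim: w phi => [|m t IH] phi; first by rewrite /lin big_nil.
by rewrite /= /lin big_cons -/(lin _ _) lin_map IH.
Qed.

Lemma lin_Delta_ab a b phi F : lin phi (Delta_ab a b F) = lin (dop a b phi) F.
Proof.
rewrite /Delta_ab /flin lin_flat; apply: eq_bigr => x _; by rewrite lin_dlt.
Qed.

Lemma dop_ext a b phi psi w : phi =1 psi -> dop a b phi w = dop a b psi w.
Proof.
elim: w phi psi => [|m t IH] phi psi e //=.
by rewrite e (IH _ (fun s => psi (sig a b m :: s))).
Qed.

Lemma dop_ext_size a b phi psi w :
  (forall s, (size s).+1 = size w -> phi s = psi s) -> dop a b phi w = dop a b psi w.
Proof.
elim: w phi psi => [|m t IH] phi psi e //=.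
rewrite e //; congr (_ + _); apply: IH => s /= es; apply: e; by rewrite /= es.
Qed.

Lemma dop_sum (T : Type) a b (r : seq T) (c : T -> rat) (F : T -> word -> rat) w :
  dop a b (fun s => \sum_(x <- r) c x * F x s) w = \sum_(x <- r) c x * dop a b (F x) w.
Proof.
elim: w F => [|m t IH] F /=; first by rewrite big1 // => x _; rewrite mulr0.
rewrite (IH (fun x s => F x (sig a b m :: s))) big_distrr -big_split /=.
by apply: eq_bigr => x _; rewrite mulrDr mulrCA.
Qed.

Lemma dop_lin a b c phi psi w :
  dop a b (fun s => c * phi s + psi s) w = c * dop a b phi w + dop a b psi w.
Proof.
elim: w phi psi => [|m t IH] phi psi /=; first by rewrite mulr0 addr0.
rewrite IH; ring.
Qed.

Lemma dop0 a b w : dop a b (fun _ => 0) w = 0.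
Proof. by elim: w => [|m t IH] //=; rewrite mulr0 add0r IH. Qed.

Definition DopW (u : word) (phi : word -> rat) := foldl (fun f l => dop l.1 l.2 f) phi u.

Lemma DopW_ext u phi psi : phi =1 psi -> DopW u phi =1 DopW u psi.
Proof.
elim: u phi psi => [|l u IH] phi psi e //=.
apply: IH => w; exact: dop_ext.
Qed.

Lemma DopW_sum (T : Type) u (r : seq T) (c : T -> rat) (F : T -> word -> rat) w :
  DopW u (fun s => \sum_(x <- r) c x * F x s) w = \sum_(x <- r) c x * DopW u (F x) w.
Proof.
elim: u F => [|l u IH] F //=.
rewrite (DopW_ext u (fun w => dop_sum l.1 l.2 r c F w)).
exact: (IH (fun x => dop l.1 l.2 (F x))).
Qed.

Lemma DopW0 u w : DopW u (fun _ => 0) w = 0.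
Proof.
elim: u => [|l u IH] //=.
by rewrite (DopW_ext u (dop0 l.1 l.2)).
Qed.

Lemma lin_DeltaW u phi F : lin phi (DeltaW u F) = lin (DopW u phi) F.
Proof.
elim: u phi => [|l u IH] phi //=.
by rewrite lin_Delta_ab IH.
Qed.

Definition nop (a b : 'I_n) (phi : word -> rat) (w : word) : rat :=
  lin phi (nab_rword a b (rev w)).

Lemma lin_Nabla_ab a b phi F : lin phi (Nabla_ab a b F) = lin (nop a b phi) F.
Proof. by rewrite /Nabla_ab /flin (lin_flat _ _ (fun w => nab_rword a b (rev w))). Qed.

Definition NopW (u : word) (phi : word -> rat) := foldr (fun l f => nop l.1 l.2 f) phi u.

Lemma NopW_ext u phi psi : phi =1 psi -> NopW u phi =1 NopW u psi.
Proof.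
elim: u => [|l u IH] e //= w.
rewrite /nop; apply: lin_ext; exact: IH.
Qed.

Lemma lin_NablaW u phi F : lin phi (NablaW u F) = lin (NopW u phi) F.
Proof.
elim: u F => [|l u IH] F //=.
by rewrite IH lin_Nabla_ab.
Qed.

Definition B (u : word) : word -> rat := DopW u phi0.
Definition N (u : word) : word -> rat := NopW u phi0.

Lemma B_rcons u l : B (rcons u l) = dop l.1 l.2 (B u).
Proof. by rewrite /B /DopW foldl_rcons. Qed.

Lemma B_cat u v : B (u ++ v) = DopW v (B u).
Proof. by rewrite /B /DopW foldl_cat. Qed.

Lemma N_cat u v : N (u ++ v) = NopW u (N v).
Proof. by rewrite /N /NopW foldr_cat. Qed.

Lemma B_size u w : size u != size w -> B u w = 0.
Proof.
elim/last_ind: u w => [|u l IH] w.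
  by rewrite /B /= /phi0; case: w.
rewrite B_rcons size_rcons => hs.
suff: forall phi, (forall s, (size s).+1 = size w -> phi s = 0) -> dop l.1 l.2 phi w = 0.
  apply => s es; apply: IH; apply: contra hs => /eqP ->; by rewrite es.
elim: w {hs} => [|m t IHt] phi e //=.
rewrite e // mulr0 add0r; apply: IHt => s es; apply: e; by rewrite /= es.
Qed.

Lemma B_nil_r v : B v [::] = phi0 v.
Proof.
case/lastP: v => [|v l] //; rewrite B_rcons /=.
by rewrite /phi0; case: v.
Qed.


Ltac eqcase := repeat (match goal with |- context [?x == ?y] =>
  let H := fresh "H" in case: (@eqP _ x y) => H; try subst end);
  try done; try (exfalso; by auto).

Lemma ev_sym (a b : 'I_n) (m : letter) : ev a b m = ev m.1 m.2 (a, b).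
Proof. case: m => c d /=; rewrite /ev !xpair_eqE /=; eqcase. Qed.

Lemma ev_anti (a b : 'I_n) (m : letter) : ev b a m = - ev a b m.
Proof. case: m => c d; rewrite /ev !xpair_eqE /=; eqcase; by rewrite ?opprK ?oppr0. Qed.

Lemma ev_diag (a : 'I_n) (m : letter) : ev a a m = 0.
Proof. by rewrite /ev eqxx. Qed.

Definition ps (s : {perm 'I_n}) (m : letter) : letter := (s m.1, s m.2).

Lemma ev_perm (s : {perm 'I_n}) (a b : 'I_n) (m : letter) : ev (s a) (s b) (ps s m) = ev a b m.
Proof. case: m => c d; by rewrite /ev /ps /= !xpair_eqE !(inj_eq perm_inj). Qed.

Lemma tperm_conj (s : {perm 'I_n}) (a b x : 'I_n) : tperm (s a) (s b) (s x) = s (tperm a b x).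
Proof. by rewrite (inj_tperm _ _ _ (@perm_inj _ s)). Qed.

Lemma sig_perm (s : {perm 'I_n}) (a b : 'I_n) (m : letter) : sig (s a) (s b) (ps s m) = ps s (sig a b m).
Proof. by rewrite /sig /ps /= !tperm_conj. Qed.

Lemma sig_ps (c d : 'I_n) (m : letter) : sig c d m = ps (tperm c d) m.
Proof. by []. Qed.

Lemma ev_sig (a b c d : 'I_n) (m : letter) : ev a b (sig c d m) = ev (tperm c d a) (tperm c d b) m.
Proof.
rewrite sig_ps -{1}(tpermK c d a) -{1}(tpermK c d b).
by rewrite (ev_perm (tperm c d) (tperm c d a)).
Qed.

Lemma sigK (a b : 'I_n) (m : letter) : sig a b (sig a b m) = m.
Proof. by case: m => c d; rewrite /sig /= !tpermK. Qed.

Lemma ev_sig_self (a b : 'I_n) (m : letter) : ev a b (sig a b m) = - ev a b m.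
Proof. by rewrite ev_sig tpermL tpermR ev_anti. Qed.

Lemma sig_anti (a b : 'I_n) (m : letter) : sig b a m = sig a b m.
Proof. by rewrite /sig tpermC. Qed.

Lemma B_cons_r (v : word) (l : letter) (X : word) :
  B v (l :: X) = lin (fun w => B w X) (nab_rword l.1 l.2 (rev v)).
Proof.
elim/last_ind: v l X => [|v m IH] l X.
  by rewrite /lin big_nil.
rewrite B_rcons /= rev_rcons /= /lin big_cons big_map revK /=.

rewrite (ev_sym m.1) -surjective_pairing; congr (_ + _).
rewrite (dop_ext _ _ _ (fun s => IH (sig m.1 m.2 l) s)).
rewrite /lin (dop_sum _ _ _ (fun x => x.1) (fun x s => B x.2 s)).
apply: eq_bigr => x _; by rewrite B_rcons.
Qed.

Lemma NB u v : N u v = B v u.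
Proof.
elim: u v => [|l u IH] v.
  by rewrite B_nil_r.
rewrite /N /= -/(N u) /nop (lin_ext _ IH).
by rewrite B_cons_r.
Qed.

Lemma dop_rcons (a b : 'I_n) phi (w : word) (m : letter) :
  dop a b phi (rcons w m) =
  ev a b m * phi (map (sig a b) w) + dop a b (fun s => phi (rcons s m)) w.
Proof.
elim: w phi => [|x t IH] phi /=; first by rewrite !addr0.
rewrite IH /=; ring.
Qed.

Lemma dop_swap (a b c d : 'I_n) (F : word -> word -> rat) (v w : word) :
  dop a b (fun s => dop c d (F s) v) w = dop c d (fun t => dop a b (fun s => F s t) w) v.
Proof.
elim: w F => [|x t IH] F /=; first by rewrite dop0.
rewrite dop_lin; congr (_ + _).
exact: (IH (fun s => F (sig a b x :: s))).
Qed.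

Lemma dop_perm (s : {perm 'I_n}) (a b : 'I_n) phi (w : word) :
  dop (s a) (s b) phi (map (ps s) w) = dop a b (fun t => phi (map (ps s) t)) w.
Proof.
elim: w phi => [|x t IH] phi //=.
rewrite ev_perm sig_perm IH //.
Qed.

Lemma B_perm (s : {perm 'I_n}) (x y : word) : B (map (ps s) x) (map (ps s) y) = B x y.
Proof.
elim/last_ind: x y => [|x l IH] y.
  by rewrite /B /= /phi0; case: y.
rewrite map_rcons !B_rcons dop_perm.
by apply: dop_ext => t; rewrite IH.
Qed.

Lemma ev_nz_sig (l m : letter) : ev l.1 l.2 m != 0 -> sig l.1 l.2 =1 sig m.1 m.2.
Proof.
case: l => a b; case: m => c d /= H x; move: H; rewrite /ev /sig /= ?xpair_eqE.
have [->|hab] := eqVneq a b; first by rewrite eqxx.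
have [e1|h1] := eqVneq c a; have [e2|h2] := eqVneq d b;
have [e3|h3] := eqVneq c b; have [e4|h4] := eqVneq d a; rewrite /= ?eqxx //;
  try (by rewrite e1 e2); try (by rewrite e3 e4 tpermC).
Qed.

Lemma B_sym_k k : forall u v : word, (size u <= k)%N -> B u v = B v u.
Proof.
elim: k => [|k IH] u v.
  rewrite leqn0 => /nilP ->; by rewrite B_nil_r.
move=> hu.
have [e|ne] := eqVneq (size u) (size v); last first.
  rewrite !B_size //; by rewrite eq_sym.
case/lastP: u hu e => [|u l] hu e.
  by rewrite B_nil_r.
case/lastP: v e => [|v m] e.
  by rewrite B_nil_r.
have hu' : (size u <= k)%N by move: hu; rewrite size_rcons.
rewrite !B_rcons !dop_rcons.
rewrite (dop_ext _ _ _ (fun s => IH _ _ hu')).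
have hv' : (size v <= k)%N by move: e hu; rewrite !size_rcons => -[<-].
rewrite [in RHS](dop_ext _ _ _ (fun s => IH _ _ hv')).
rewrite [in RHS](@dop_ext _ _ (fun s => B (rcons s l) v) (fun t => dop l.1 l.2 (B t) v) _); last first.
  by move=> t; rewrite B_rcons.
rewrite (@dop_ext _ _ (fun s => B (rcons s m) u) (fun t => dop m.1 m.2 (B t) u) _); last first.
  by move=> t; rewrite B_rcons.
rewrite dop_swap.
congr (_ + _); last first.
  apply: dop_ext => t; apply: dop_ext_size => s es.
  apply: IH; move: hv'; rewrite -es /=; exact: ltnW.
rewrite ev_sym -surjective_pairing.
have [z|nz] := eqVneq (ev m.1 m.2 l) 0; first by rewrite z !mul0r.
congr (_ * _).
rewrite IH // -(B_perm (tperm m.1 m.2)).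
have -> : map (ps (tperm m.1 m.2)) (map (sig l.1 l.2) v) = v.
  rewrite -map_comp -[RHS]map_id; apply: eq_map => x /=.
  rewrite -(ev_nz_sig nz) sig_ps.
  by case: x => p q; rewrite /ps /= !tpermK.
congr (B v _); apply: eq_map => x; by rewrite -sig_ps.
Qed.

Lemma B_sym (u v : word) : B u v = B v u.
Proof. exact: (@B_sym_k (size u) u v (leqnn _)). Qed.

Lemma dop_diag (a : 'I_n) phi (w : word) : dop a a phi w = 0.
Proof. elim: w phi => [|m t IH] phi //=; by rewrite ev_diag mul0r add0r IH. Qed.

Lemma dop_anti (a b : 'I_n) phi (w : word) : dop b a phi w = - dop a b phi w.
Proof.
elim: w phi => [|m t IH] phi /=; first by rewrite oppr0.
by rewrite ev_anti sig_anti IH opprD mulNr.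
Qed.

Lemma dop2 (a b c d : 'I_n) phi (m : letter) (t : word) :
  dop a b (dop c d phi) (m :: t) =
  ev a b m * dop c d phi t + ev c d (sig a b m) * dop a b phi t +
  dop a b (dop c d (fun s => phi (sig c d (sig a b m) :: s))) t.
Proof. by rewrite /= dop_lin addrA. Qed.

Lemma dop_sq (a b : 'I_n) phi (w : word) : dop a b (dop a b phi) w = 0.
Proof.
elim: w phi => [|m t IH] phi //.
rewrite dop2 sigK ev_sig_self IH; ring.
Qed.

Lemma tperm_comm (i j k l x : 'I_n) : uniq [:: i; j; k; l] ->
  tperm i j (tperm k l x) = tperm k l (tperm i j x).
Proof.
rewrite /= !inE !negb_or => /and4P[/and3P[ij ik il] /andP[jk jl] kl _].
rewrite (inj_tperm _ _ _ (@perm_inj _ (tperm i j))) (tpermD ik) ?(tpermD il) //; by rewrite eq_sym.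
Qed.

Lemma dop_comm (i j k l : 'I_n) phi (w : word) : uniq [:: i; j; k; l] ->
  dop k l (dop i j phi) w = dop i j (dop k l phi) w.
Proof.
move=> U; have U' : uniq ([:: k; l] ++ [:: i; j]) by rewrite uniq_catC.
move: (U); rewrite /= !inE !negb_or => /and4P[/and3P[ij ik il] /andP[jk jl] kl _].
have ki : k != i by rewrite eq_sym. have li : l != i by rewrite eq_sym.
have kj : k != j by rewrite eq_sym. have lj : l != j by rewrite eq_sym.
elim: w phi => [|m t IH] phi //.
rewrite !dop2 !ev_sig (tpermD ki li) (tpermD kj lj) (tpermD ik jk) (tpermD il jl).
have -> : sig i j (sig k l m) = sig k l (sig i j m).
  by case: m => p q; rewrite /sig /= (tperm_comm _ U') (tperm_comm _ U').
by rewrite IH; ring.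
Qed.

Lemma tperm3 (i j k x : 'I_n) : uniq [:: i; j; k] ->
  tperm j k (tperm k i x) = tperm i j (tperm j k x) /\
  tperm k i (tperm i j x) = tperm i j (tperm j k x).
Proof.
rewrite /= !inE !negb_or => /and3P[/andP[ij ik] jk _].
have ji : j != i by rewrite eq_sym. have ki : k != i by rewrite eq_sym.
split.
  rewrite [LHS](inj_tperm _ _ _ (@perm_inj _ (tperm j k))) tpermR (tpermD ji ki).
  by rewrite tpermC.
rewrite [RHS](inj_tperm _ _ _ (@perm_inj _ (tperm i j))) tpermR (tpermD ik jk).
by rewrite tpermC.
Qed.

Lemma dop_three (i j k : 'I_n) phi (w : word) : uniq [:: i; j; k] ->
  dop j k (dop i j phi) w + (dop k i (dop j k phi) w + dop i j (dop k i phi) w) = 0.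
Proof.
move=> U; move: (U); rewrite /= !inE !negb_or => /and3P[/andP[ij ik] jk _].
have ji : j != i by rewrite eq_sym. have ki : k != i by rewrite eq_sym.
have kj : k != j by rewrite eq_sym.
elim: w phi => [|m t IH] phi; first by rewrite /= !addr0.
rewrite !dop2 !ev_sig (tpermD ji ki) (tpermD kj ij) (tpermD ik jk) ?tpermL ?tpermR.
have -> : sig j k (sig k i m) = sig i j (sig j k m).
  by case: m => p q; rewrite /sig /= !(proj1 (tperm3 _ U)).
have -> : sig k i (sig i j m) = sig i j (sig j k m).
  by case: m => p q; rewrite /sig /= !(proj2 (tperm3 _ U)).
have := IH (fun s => phi (sig i j (sig j k m) :: s)).
rewrite (ev_anti k i) (ev_anti i j) (ev_anti j k).
move=> H; lra.
Qed.

Lemma DopW_cat (u v : word) phi : DopW (u ++ v) phi = DopW v (DopW u phi).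
Proof. by rewrite /DopW foldl_cat. Qed.

Lemma rel_zero (r : fa) : fk_rel r -> forall psi s,
  \sum_(x <- r) x.1 * DopW x.2 psi s = 0.
Proof.
case=> [i|i j ij|i j ij|i j k l U|i j k U] psi s;
  rewrite /= !big_cons big_nil /= ?mul1r ?addr0.
- exact: dop_diag.
- rewrite dop_anti; ring.
- exact: dop_sq.
- rewrite (dop_comm _ _ U); ring.
- exact: dop_three.
Qed.

Lemma ideal_zero (R : fa) : fk_ideal R -> forall t, lin (fun w => B w t) R = 0.
Proof.
elim=> [|P r c u v _ IH rr] t; first by rewrite /lin big_nil.
rewrite /fadd lin_cat lin_scale IH add0r lin_fmul big_cons big_nil addr0 /=.
have -> : \sum_(y <- fmul r (fword v)) 1 * y.1 * B (u ++ y.2) t =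
          lin (fun w => B (u ++ w) t) (fmul r (fword v)).
  by apply: eq_bigr => y _; rewrite mul1r.
rewrite lin_fmul.
under eq_bigr => x _ do rewrite big_cons big_nil addr0 /= mulr1 B_cat DopW_cat.
rewrite -(DopW_sum v r (fun x => x.1) (fun x => DopW x.2 (B u))).
rewrite (DopW_ext v (fun s => rel_zero rr (B u) s)) DopW0; ring.
Qed.

Definition bf (P Q : fa) : rat := \sum_(x <- P) x.1 * lin (B x.2) Q.

Lemma fk_form_bf P Q : fk_form P Q = bf P Q.
Proof.
rewrite /fk_form /bf; apply: eq_bigr => x _; congr (_ * _).
rewrite scal_lin lin_DeltaW /lin /hpart big_filter [LHS]big_mkcond.
apply: eq_bigr => y _; case: eqP => // /eqP h.
by rewrite -/(B _) B_size ?mulr0 // eq_sym.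
Qed.

Lemma scal_Delta P Q : scal (Delta P Q) = bf P Q.
Proof.
rewrite scal_lin /Delta (lin_flat _ _ (fun w => DeltaW w Q)).
by apply: eq_bigr => x _; rewrite lin_DeltaW.
Qed.

Lemma NB' u v : N u v = B u v.
Proof. by rewrite NB B_sym. Qed.

Lemma scal_Nabla P Q : scal (Nabla Q P) = bf P Q.
Proof.
rewrite scal_lin /Nabla (lin_flat _ _ (fun w => NablaW w Q)).
apply: eq_bigr => x _; rewrite lin_NablaW; congr (_ * _); apply: lin_ext; exact: NB'.
Qed.

Lemma bf_expand P Q : bf P Q = \sum_(x <- P) \sum_(y <- Q) x.1 * y.1 * B x.2 y.2.
Proof.
apply: eq_bigr => x _; rewrite /lin big_distrr; apply: eq_bigr => y _; by rewrite /= mulrA.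
Qed.

Lemma bf_sym P Q : bf P Q = bf Q P.
Proof.
rewrite !bf_expand exchange_big; apply: eq_bigr => y _; apply: eq_bigr => x _.
rewrite (B_sym x.2 y.2). ring.
Qed.

Lemma bf_lin c P P' Q : bf (fadd (fscale c P) P') Q = c * bf P Q + bf P' Q.
Proof.
rewrite /bf /fadd big_cat big_map big_distrr; congr (_ + _).
by apply: eq_bigr => x _; rewrite /= mulrA.
Qed.

Lemma bf_mul P1 P2 Q :
  bf (fmul P1 P2) Q = \sum_(x <- P1) \sum_(z <- P2) x.1 * z.1 * lin (B (x.2 ++ z.2)) Q.
Proof. by rewrite /bf /fmul big_allpairs_dep. Qed.

Lemma bf_Delta P1 P2 Q :
  bf P1 (Delta P2 Q) = \sum_(x <- P1) \sum_(z <- P2) x.1 * z.1 * lin (B (x.2 ++ z.2)) Q.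
Proof.
apply: eq_bigr => x _.
rewrite /Delta (lin_flat _ _ (fun w => DeltaW w Q)) big_distrr.
apply: eq_bigr => z _ /=; rewrite lin_DeltaW B_cat; ring.
Qed.

Lemma bf_Nabla P1 P2 Q :
  bf P2 (Nabla Q P1) = \sum_(x <- P1) \sum_(z <- P2) x.1 * z.1 * lin (B (x.2 ++ z.2)) Q.
Proof.
rewrite /bf.
under eq_bigr => z _ do rewrite /Nabla (lin_flat _ _ (fun w => NablaW w Q)) big_distrr.
rewrite exchange_big; apply: eq_bigr => x _; apply: eq_bigr => z _ /=.
rewrite lin_NablaW mulrCA mulrA; congr (_ * _); apply: lin_ext => w.
rewrite -NB' N_cat; apply: NopW_ext => y; by rewrite NB'.
Qed.

Lemma lin_coef G (F : fa) (S : seq word) : uniq S -> {subset [seq x.2 | x <- F] <= S} ->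
  lin G F = \sum_(w <- S) coef F w * G w.
Proof.
move=> US sub.
transitivity (\sum_(w <- S) \sum_(x <- F) (if x.2 == w then x.1 * G x.2 else 0)); last first.
  apply: eq_bigr => w _; rewrite /coef big_distrl [RHS]big_mkcond; apply: eq_bigr => x _.
  by case: eqP => [->|]; rewrite ?mul0r.
rewrite exchange_big; apply: eq_big_seq => x xF.
have xS : x.2 \in S := sub _ (map_f (fun x => x.2) xF).
rewrite -big_mkcond (eq_bigl (fun w => w == x.2)) => [|w]; last by rewrite eq_sym.
by rewrite big_const_seq count_uniq_mem // xS /= addr0.
Qed.

Lemma bf_wd P P' Q : fk_eq P P' -> bf P Q = bf P' Q.
Proof.
case=> R [IR eR].
pose G w := lin (B w) Q.
have -> : bf P Q = lin G P by [].
have -> : bf P' Q = lin G P' by [].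
pose S := undup [seq x.2 | x <- P ++ P' ++ R].
have US : uniq S by exact: undup_uniq.
have subS (F : fa) : {subset [seq x.2 | x <- F] <= [seq x.2 | x <- P ++ P' ++ R]} ->
   {subset [seq x.2 | x <- F] <= S}.
  by move=> h w /h; rewrite mem_undup.
rewrite (lin_coef G US (subS P _)); last by move=> w; rewrite map_cat mem_cat => ->.
rewrite (lin_coef G US (subS P' _)); last first.
  by move=> w; rewrite !map_cat !mem_cat => ->; rewrite orbT.
apply/eqP; rewrite -subr_eq0; apply/eqP.
rewrite -sumrB.
transitivity (lin G R); last first.
  rewrite /lin /G.
  under eq_bigr => x _ do rewrite /lin big_distrr.
  rewrite exchange_big big1 // => y _.
  transitivity (y.1 * lin (fun w => B w y.2) R); last by rewrite ideal_zero // mulr0.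
  rewrite /lin big_distrr; apply: eq_bigr => x _ /=; ring.
rewrite (lin_coef G US (subS R _)); last first.
  by move=> w; rewrite !map_cat !mem_cat => ->; rewrite !orbT.
by apply: eq_bigr => w _; rewrite -mulrBl eR.
Qed.

End Work.

Theorem mainTheorem14 (n : nat) :
  (* the four scalars agree for homogeneous P, Q of the same degree *)
  (forall (d : nat) (P Q : fa n), homogeneous d P -> homogeneous d Q ->
     [/\ scal (Delta P Q) = scal (Delta Q P),
         scal (Delta Q P) = scal (Nabla P Q) &
         scal (Nabla P Q) = scal (Nabla Q P)]) /\
  (* <,> is a well-defined form on E_n ... *)
  (forall P P' Q Q' : fa n, fk_eq P P' -> fk_eq Q Q' ->
     fk_form P Q = fk_form P' Q') /\
  (* ... which is bilinear ... *)
  (forall (c : rat) (P P' Q : fa n),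
     fk_form (fadd (fscale c P) P') Q = c * fk_form P Q + fk_form P' Q /\
     fk_form Q (fadd (fscale c P) P') = c * fk_form Q P + fk_form Q P') /\
  (* ... and symmetric *)
  (forall P Q : fa n, fk_form P Q = fk_form Q P) /\
  (* adjointness *)
  (forall P1 P2 Q : fa n,
     fk_form (fmul P1 P2) Q = fk_form P1 (Delta P2 Q) /\
     fk_form P1 (Delta P2 Q) = fk_form P2 (Nabla Q P1)).
Proof.
split.
  move=> d P Q _ _; rewrite !scal_Delta !scal_Nabla; split; by rewrite bf_sym.
split.
  move=> P P' Q Q' hP hQ; rewrite !fk_form_bf (bf_wd _ hP) bf_sym (bf_wd _ hQ) bf_sym //.
split.
  move=> c P P' Q; rewrite !fk_form_bf bf_lin; split => //.
  by rewrite bf_sym bf_lin !(bf_sym Q).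
split.
  by move=> P Q; rewrite !fk_form_bf bf_sym.
move=> P1 P2 Q; rewrite !fk_form_bf bf_mul bf_Delta bf_Nabla; by split.
Qed.
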